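(* Let $0<r<1$ and let $A,B\in C_{1,r}$ be doubly commuting operators on a Hilbert space $\mathcal H$ (i.e. $AB=BA$ and $AB^*=B^*A$). Let $\mathcal H=\mathcal H_1\oplus\mathcal H_2$ be the canonical decomposition of $A$, where $\mathcal H_1$ is the maximal closed subspace reducing $A$ such that $A|_{\mathcal H_1}\in\mathcal C_{1,r}$ and $\mathcal H_2=\mathcal H\ominus\mathcal H_1$ (so $A|_{\mathcal H_2}$ is a c.n.u. $C_{1,r}$-contraction). Then $\mathcal H_1$ and $\mathcal H_2$ are reducing subspaces for $B$.
   Context: $C_{1,r}=\{T: T\text{ invertible},\ \|T\|\le1,\ \|rT^{-1}\|\le1\}$. $\mathcal C_{1,r}$ is the class of operators $J$ on a Hilbert space $\mathcal L$ for which there exist orthogonal projections $P_0,P_1$ on $\mathcal L$ with $P_0+P_1=I_{\mathcal L}$ and $J^*J=P_0+r^2P_1$. An operator $T\in C_{1,r}$ on $\mathcal H$ is a c.n.u. $C_{1,r}$-contraction if $\mathcal H$ has no non-zero closed subspace that reduces $T$ to an operator in $\mathcal C_{1,r}$. (Such a maximal reducing subspace $\mathcal H_1$ exists and the decomposition is unique.) *)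

(* Defs.v *)
From HB Require Import structures.
From mathcomp Require Import all_boot all_order all_algebra.
From mathcomp Require Import complex.
From mathcomp Require Import reals.
Set Implicit Arguments. Unset Strict Implicit. Unset Printing Implicit Defensive.
Import Order.TTheory GRing.Theory Num.Theory.
Local Open Scope ring_scope.
Local Open Scope complex_scope.

Section Hilbert.
Variables (R : realType) (V : lmodType R[i]) (ip : V -> V -> R[i]).

Definition is_inner_product : Prop :=
  [/\ (forall (a : R[i]) x y z, ip (a *: x + y) z = a * ip x z + ip y z),
      (forall x y, ip x y = (ip y x)^*),
      (forall x, 0 <= ip x x) &
      (forall x, ip x x = 0 -> x = 0)].

Definition hnorm (x : V) : R[i] := sqrtC (ip x x).

Definition converges (u : nat -> V) (l : V) : Prop :=
  forall e : R[i], 0 < e -> exists N, forall n, (N <= n)%N -> hnorm (u n - l) < e.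

Definition cauchy (u : nat -> V) : Prop :=
  forall e : R[i], 0 < e -> exists N, forall m n, (N <= m)%N -> (N <= n)%N ->
    hnorm (u m - u n) < e.

Definition complete : Prop := forall u, cauchy u -> exists l, converges u l.

Definition bounded_op (T : V -> V) : Prop :=
  (forall (a : R[i]) x y, T (a *: x + y) = a *: T x + T y) /\
  exists c : R[i], forall x, hnorm (T x) <= c * hnorm x.

Definition is_adjoint (T T' : V -> V) : Prop := forall x y, ip (T x) y = ip x (T' y).

Definition in_C1r (r : R[i]) (T : V -> V) : Prop :=
  bounded_op T /\
  (exists S : V -> V, [/\ bounded_op S, (forall x, S (T x) = x), (forall x, T (S x) = x)
                         & forall x, hnorm (r *: S x) <= hnorm x]) /\
  (forall x, hnorm (T x) <= hnorm x).

Definition closed_subspace (M : V -> Prop) : Prop :=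
  [/\ M 0, (forall (a : R[i]) x y, M x -> M y -> M (a *: x + y)) &
      (forall u l, (forall n, M (u n)) -> converges u l -> M l)].

Definition reduces (M : V -> Prop) (T T' : V -> V) : Prop :=
  (forall x, M x -> M (T x)) /\ (forall x, M x -> M (T' x)).

Definition ocompl (M : V -> Prop) : V -> Prop := fun x => forall y, M y -> ip x y = 0.

Definition orth_proj_on (M : V -> Prop) (P : V -> V) : Prop :=
  [/\ (forall x, M x -> M (P x)),
      (forall (a : R[i]) x y, M x -> M y -> P (a *: x + y) = a *: P x + P y),
      (forall x, M x -> P (P x) = P x) &
      (forall x y, M x -> M y -> ip (P x) y = ip x (P y))].

(* For M reducing T (with adjoint T'), the restriction J = T|_M has adjoint
   J^* = T'|_M; J in class \mathcal C_{1,r}: there are orthogonal projections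
   P0, P1 on M with P0 + P1 = I_M and J^* J = P0 + r^2 P1. *)
Definition restr_in_CC1r (r : R[i]) (M : V -> Prop) (T T' : V -> V) : Prop :=
  exists P0 P1 : V -> V,
    [/\ orth_proj_on M P0, orth_proj_on M P1,
        (forall x, M x -> P0 x + P1 x = x) &
        (forall x, M x -> T' (T x) = P0 x + (r ^+ 2) *: P1 x)].

End Hilbert.

(* Main.v *)
Require Import Defs.
From HB Require Import structures.
From mathcomp Require Import all_boot all_order all_algebra.
From mathcomp Require Import complex.
From mathcomp Require Import reals.
From mathcomp Require Import ring lra.
Import Order.TTheory GRing.Theory Num.Theory.
Local Open Scope ring_scope.
Local Open Scope complex_scope.
Set Implicit Arguments. Unset Strict Implicit. Unset Printing Implicit Defensive.

Section Basics.
Variables (R : realType) (V : lmodType R[i]) (ip : V -> V -> R[i]).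
Hypothesis hip : is_inner_product ip.

Lemma ip_lin a x y z : ip (a *: x + y) z = a * ip x z + ip y z.
Proof. by case: hip. Qed.
Lemma ipC x y : ip x y = (ip y x)^*.
Proof. by case: hip. Qed.
Lemma ip0l z : ip 0 z = 0.
Proof.
have h := ip_lin 1 0 0 z; rewrite scaler0 addr0 mul1r in h.
by apply: (addrI (ip 0 z)); rewrite addr0 -h.
Qed.
Lemma ipDl x y z : ip (x + y) z = ip x z + ip y z.
Proof. by rewrite -[x]scale1r ip_lin mul1r scale1r. Qed.
Lemma ipZl a x z : ip (a *: x) z = a * ip x z.
Proof. by rewrite -[a *: x]addr0 ip_lin ip0l addr0. Qed.
Lemma ipNl x z : ip (- x) z = - ip x z.
Proof. by rewrite -scaleN1r ipZl mulN1r. Qed.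
Lemma ipBl x y z : ip (x - y) z = ip x z - ip y z.
Proof. by rewrite ipDl ipNl. Qed.
Lemma ip0r z : ip z 0 = 0.
Proof. by rewrite ipC ip0l conjc0. Qed.
Lemma ipDr x y z : ip z (x + y) = ip z x + ip z y.
Proof. by rewrite ipC ipDl rmorphD [ip z x]ipC [ip z y]ipC. Qed.
Lemma ipZr a x z : ip z (a *: x) = a^* * ip z x.
Proof. by rewrite ipC ipZl rmorphM [ip z x]ipC. Qed.
Lemma ipNr x z : ip z (- x) = - ip z x.
Proof. by rewrite ipC ipNl rmorphN [ip z x]ipC. Qed.
Lemma ipBr x y z : ip z (x - y) = ip z x - ip z y.
Proof. by rewrite ipDr ipNr. Qed.

Lemma ip_ext u v : (forall z, ip u z = ip v z) -> u = v.
Proof.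
move=> h; apply/eqP; rewrite -subr_eq0; apply/eqP.
by case: hip => _ _ _; apply; rewrite ipBl h subrr.
Qed.
Lemma ip_extr u v : (forall z, ip z u = ip z v) -> u = v.
Proof. by move=> h; apply: ip_ext => z; rewrite ipC h -ipC. Qed.

Definition lin (f : V -> V) := forall a x y, f (a *: x + y) = a *: f x + f y.

Lemma lin0 f : lin f -> f 0 = 0.
Proof.
move=> h; have h0 := h 1 0 0; rewrite scaler0 addr0 scale1r in h0.
by apply: (addrI (f 0)); rewrite addr0 -h0.
Qed.
Lemma linD f : lin f -> forall x y, f (x + y) = f x + f y.
Proof. by move=> h x y; rewrite -[x]scale1r h !scale1r. Qed.
Lemma linZ f : lin f -> forall a x, f (a *: x) = a *: f x.
Proof. by move=> h a x; rewrite -[a *: x]addr0 h lin0 // addr0. Qed.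
Lemma linN f : lin f -> forall x, f (- x) = - f x.
Proof. by move=> h x; rewrite -scaleN1r linZ // scaleN1r. Qed.
Lemma linB f : lin f -> forall x y, f (x - y) = f x - f y.
Proof. by move=> h x y; rewrite linD // linN. Qed.
Lemma lin_comp f g : lin f -> lin g -> lin (fun x => f (g x)).
Proof. by move=> hf hg a x y; rewrite hg hf. Qed.

Lemma adj_lin T T' : is_adjoint ip T T' -> lin T'.
Proof.
move=> h a x y; apply: ip_extr => z.
by rewrite -h ipDr ipZr ipDr ipZr -!h.
Qed.
Lemma adj_sym T T' : is_adjoint ip T T' -> forall x y, ip (T' x) y = ip x (T y).
Proof. by move=> h x y; rewrite ipC -h -ipC. Qed.

Lemma bounded_lin T : bounded_op ip T -> lin T.
Proof. by case. Qed.

Lemma cE (z : R[i]) : conjc z = Num.conj z. Proof. reflexivity. Qed.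

Lemma conjCr (x : R) (a : R[i]) : a = x%:C -> a^* = a.
Proof. by move=> ->; exact: conjc_real. Qed.

Lemma lim_orth (u : nat -> V) l v :
  (forall n, ip (u n) v = 0) -> converges ip u l -> ip l v = 0.
Proof.
move=> hu hc; apply/eqP/negPn/negP => ha.
set b := - ip l v.
have hb : b != 0 by rewrite oppr_eq0.
have Mge : 0 <= b * b^* by apply: mulcJ_ge0.
set M0 := complex.Re (b * b^*).
have hM : M0%:C = b * b^* by apply: RRe_real; apply: ger0_real.
have M0pos : 0 < M0.
  rewrite lt0r -ler0c hM Mge andbT; apply/eqP => h0.
  by move: hM; rewrite h0 => /esym/eqP; rewrite mulf_eq0 conjc_eq0 (negPf hb).
have cge : 0 <= ip v v by case: hip.
set c0 := complex.Re (ip v v).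
have hc0 : c0%:C = ip v v by apply: RRe_real; apply: ger0_real.
have c0ge : 0 <= c0 by rewrite -ler0c hc0.
set k0 := c0 + 1.
have k0pos : 0 < k0 by rewrite /k0; lra.
set e := sqrtC (M0%:C) / k0%:C.
have epos : 0 < e.
  by rewrite divr_gt0 // ?sqrtC_gt0 ?ltcR //.
have [N hN] := hc e epos.
have := hN N (leqnn N).
set d := u N - l.
move=> hd.
have Dge : 0 <= ip d d by case: hip.
set D0 := complex.Re (ip d d).
have hD0 : D0%:C = ip d d by apply: RRe_real; apply: ger0_real.
have D0ge : 0 <= D0 by rewrite -ler0c hD0.
have hD : D0 * (k0 ^+ 2) < M0.
  have h : ip d d < e * e.
    rewrite -[ip d d]sqrtCK expr2; apply: ltr_pM => //; by rewrite sqrtC_ge0.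
  have sq : sqrtC (M0%:C) * sqrtC (M0%:C) = M0%:C by rewrite -expr2 sqrtCK.
  have ee : e * e = (M0 / k0 ^+ 2)%:C.
    rewrite /e mulrACA sq rmorphM /= fmorphV rmorphXn /= -exprVn expr2 //.
  move: h; rewrite ee -hD0 ltcR ltr_pdivlMr //; exact: exprn_gt0.
have hdv : ip d v = b by rewrite /d ipBl hu sub0r.
have hdv' : ip v d = Num.conj b by rewrite ipC hdv.
have hM' : M0%:C = b * Num.conj b by rewrite hM.
set s0 := k0^-1.
have hs : s0 * k0 = 1 by rewrite mulVf // gt_eqF.
set t := s0%:C * b.
have ht : Num.conj t = s0%:C * Num.conj b.
  by rewrite /t rmorphM /=; congr (_ * _); rewrite -cE; exact: conjc_real.
have nn : 0 <= ip (d - t *: v) (d - t *: v) by case: hip.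
have E : ip (d - t *: v) (d - t *: v) = (D0 - 2 * s0 * M0 + s0 ^+ 2 * M0 * c0)%:C.
  clearbody d b; rewrite ipBl !ipBr !ipZl !ipZr ?cE hdv hdv' -hD0 -hc0 ht /t.
  rewrite !rmorphD !rmorphN !rmorphM /= ?rmorphXn /= ?rmorph_nat hM'.
  ring.
move: nn; rewrite E ler0c => nn.
have k2 : 0 <= k0 ^+ 2 by rewrite exprn_ge0 // ltW.
have := mulr_ge0 k2 nn.
have -> : k0 ^+ 2 * (D0 - 2 * s0 * M0 + s0 ^+ 2 * M0 * c0) =
   D0 * k0 ^+ 2 - 2 * M0 * k0 * (s0 * k0) + M0 * c0 * (s0 * k0) ^+ 2 by ring.
rewrite hs /k0 in hD *. nra.
Qed.
End Basics.

Section Main.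
Variables (R : realType) (V : lmodType R[i]) (ip : V -> V -> R[i]).
Hypothesis hip : is_inner_product ip.
Variables (r : R[i]) (A A' : V -> V).
Hypothesis hr0 : 0 < r.
Hypothesis hr1 : r < 1.
Hypothesis hA' : is_adjoint ip A A'.
Hypothesis hAl : lin A.

Let hA'l : lin A' := adj_lin hip hA'.

Definition Tm x := A' (A x).
Definition Qm x := Tm (Tm x) - (1 + r ^+ 2) *: Tm x + r ^+ 2 *: x.

Lemma Tlin : lin Tm.
Proof. exact: lin_comp. Qed.
Lemma Qlin : lin Qm.
Proof.
move=> a x y; rewrite /Qm !(linD Tlin, linZ Tlin).
apply: (ip_ext hip) => z.
rewrite !(ipDl hip, ipZl hip, ipBl hip, ipNl hip). ring.
Qed.
Lemma Tadj x y : ip (Tm x) y = ip x (Tm y).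
Proof. by rewrite /Tm (adj_sym hip hA') hA'. Qed.

Lemma rreal : Num.conj r = r.
Proof. by apply: conj_Creal; apply: gtr0_real. Qed.

Lemma Qadj x y : ip (Qm x) y = ip x (Qm y).
Proof.
rewrite /Qm !(ipDl hip, ipZl hip, ipBl hip, ipNl hip, ipDr hip, ipZr hip, ipBr hip, ipNr hip).
by rewrite !Tadj ?cE !rmorphD ?rmorphXn /= ?rmorph1 ?rreal.
Qed.

Fixpoint ev (w : seq bool) x := match w with [::] => x | b :: w => (if b then A else A') (ev w x) end.
Fixpoint eva (w : seq bool) z := match w with [::] => z | b :: w => eva w ((if b then A' else A) z) end.

Lemma ev_lin w : lin (ev w).
Proof. elim: w => [|[] w IH] a x y //=; by rewrite IH ?hAl ?hA'l. Qed.
Lemma ev_cat w1 w2 x : ev (w1 ++ w2) x = ev w1 (ev w2 x).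
Proof. by elim: w1 => [|b w IH] //=; rewrite IH. Qed.
Lemma ev_adj w x z : ip (ev w x) z = ip x (eva w z).
Proof.
elim: w z => [|[] w IH] z //=; first by rewrite hA' IH.
by rewrite (adj_sym hip hA') IH.
Qed.

Definition NN x := forall w, Qm (ev w x) = 0.

Lemma NN_closed : closed_subspace ip NN.
Proof.
split.
- by move=> w; rewrite (lin0 (ev_lin w)) (lin0 Qlin).
- move=> a x y hx hy w; by rewrite (ev_lin w) Qlin hx hy scaler0 addr0.
- move=> u l hu hc w; apply: (ip_ext hip) => z.
  rewrite Qadj ev_adj (ip0l hip); apply: (lim_orth hip _ hc) => n.
  by rewrite -ev_adj -Qadj hu (ip0l hip).
Qed.

Lemma NN_red : reduces NN A A'.
Proof.
split=> x hx w.
- by rewrite -(ev_cat w [:: true]).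
- by rewrite -(ev_cat w [:: false]).
Qed.

Lemma NN_T x : NN x -> NN (Tm x).
Proof. by move=> hx; apply: (proj2 NN_red); apply: (proj1 NN_red). Qed.

Lemma NN_comb a b x y : NN x -> NN y -> NN (a *: x + b *: y).
Proof.
move=> hx hy; case: NN_closed => [h0 hl _].
by apply: (hl) => //; rewrite -[_ *: y]addr0; apply: (hl).
Qed.

Lemma r2neq : 1 - r ^+ 2 != 0.
Proof.
rewrite subr_eq0 eq_sym; apply/negP => /eqP h.
have : r ^+ 2 < 1 by rewrite expr2; have := ltr_pM (ltW hr0) (ltW hr0) hr1 hr1; rewrite mulr1.
by rewrite h ltxx.
Qed.

Definition cc := (1 - r ^+ 2)^-1.
Definition P0 x := cc *: (Tm x - r ^+ 2 *: x).
Definition P1 x := cc *: (x - Tm x).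

Lemma ccR : cc \is Num.real.
Proof. by rewrite /cc rpredV rpredB ?rpred1 // rpredX // gtr0_real. Qed.

Lemma ccreal : Num.conj cc = cc.
Proof. rewrite /cc fmorphV rmorphB rmorph1 rmorphXn; congr ((1 - _ ^+ 2)^-1); exact: rreal. Qed.

Lemma TT_eq x : Qm x = 0 -> Tm (Tm x) = (1 + r ^+ 2) *: Tm x - r ^+ 2 *: x.
Proof.
move=> hq; apply: (ip_ext hip) => z.
have := congr1 (ip^~ z) hq; rewrite /Qm /= (ip0l hip).
rewrite !(ipDl hip, ipZl hip, ipBl hip, ipNl hip) => h.
by rewrite -[ip (Tm (Tm x)) z]subr0 -h; ring.
Qed.

Ltac expl := rewrite ?(ipDl hip, ipZl hip, ipBl hip, ipNl hip).
Ltac pushT := rewrite ?(linD Tlin, linZ Tlin, linB Tlin, linN Tlin).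

Lemma P_proj (P : V -> V) (c1 c2 : R[i]) :
  (forall x, P x = c1 *: Tm x + c2 *: x) ->
  (Num.conj c1 = c1) -> (Num.conj c2 = c2) ->
  (forall x, Qm x = 0 -> P (P x) = P x) ->
  orth_proj_on ip NN P.
Proof.
move=> hP h1 h2 hPP; split.
- by move=> x hx; rewrite hP; apply: NN_comb => //; apply: NN_T.
- move=> a x y _ _; rewrite !hP; apply: (ip_ext hip) => z; pushT; expl; ring.
- by move=> x hx; apply: hPP; apply: (hx [::]).
- move=> x y _ _; rewrite !hP; expl; rewrite ?(ipDr hip, ipZr hip, ipBr hip, ipNr hip) ?cE h1 h2 Tadj; ring.
Qed.

Lemma NN_CC : restr_in_CC1r ip r NN A A'.
Proof.
have hc := r2neq.
exists P0, P1; split.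
- apply: (@P_proj P0 cc (- (cc * r ^+ 2))).
  + by move=> x; rewrite /P0 scalerBr scalerA -scaleNr.
  + exact: ccreal.
  + by apply: conj_Creal; rewrite rpredN rpredM // ?rpredX ?ccR ?gtr0_real.
  + move=> x hq; rewrite /P0; pushT; rewrite TT_eq //; apply: (ip_ext hip) => z; expl.
    rewrite /cc; field; done.
- apply: (@P_proj P1 (- cc) cc).
  + by move=> x; rewrite /P1 scalerBr addrC -scaleNr.
  + by apply: conj_Creal; rewrite rpredN ccR.
  + exact: ccreal.
  + move=> x hq; rewrite /P1; pushT; rewrite TT_eq //; apply: (ip_ext hip) => z; expl.
    rewrite /cc; field; done.
- move=> x _; apply: (ip_ext hip) => z; rewrite /P0 /P1; expl; rewrite /cc; field; done.
- move=> x _; apply: (ip_ext hip) => z; rewrite /P0 /P1; expl; rewrite /cc /Tm; field; done.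
Qed.

Lemma ev_in (M : V -> Prop) : reduces M A A' -> forall w x, M x -> M (ev w x).
Proof. by case=> h1 h2; elim=> [|[] w IH] x hx //=; [apply: h1 | apply: h2]; apply: IH. Qed.

Lemma Q0_of_CC (M : V -> Prop) : restr_in_CC1r ip r M A A' -> forall x, M x -> Qm x = 0.
Proof.
case=> Pa [Pb [[ha1 ha2 ha3 ha4] [hb1 hb2 hb3 hb4] hsum hT]] x hx.
have hp := ha1 x hx; have hq := hb1 x hx.
set p := Pa x in hp *; set q := Pb x in hq *.
have Pbp : Pb p = 0.
  have : Pa p + Pb p = p + 0 by rewrite addr0 hsum.
  by rewrite ha3 //; move/addrI.
have Paq : Pa q = 0.
  have : Pa q + Pb q = 0 + q by rewrite add0r hsum.
  by rewrite hb3 //; move/addIr.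
have Tp : Tm p = p by rewrite /Tm hT // ha3 // Pbp scaler0 addr0.
have Tq : Tm q = r ^+ 2 *: q by rewrite /Tm hT // hb3 // Paq add0r.
have Tx : Tm x = p + r ^+ 2 *: q by rewrite /Tm hT.
have xe : x = p + q by rewrite hsum.
rewrite /Qm Tx; pushT; rewrite Tp Tq [in X in _ + X]xe.
apply: (ip_ext hip) => z; expl; rewrite (ip0l hip); ring.
Qed.

Lemma NN_inv (F : V -> V) : lin F -> (forall x, F (A x) = A (F x)) ->
  (forall x, F (A' x) = A' (F x)) -> forall x, NN x -> NN (F x).
Proof.
move=> hF h1 h2 x hx w.
have -> : ev w (F x) = F (ev w x) by elim: w => [|[] w IH] //=; rewrite IH.
have -> : forall y, Qm (F y) = F (Qm y).
  by move=> y; rewrite /Qm /Tm (linD hF) (linB hF) !(linZ hF) !(h1, h2).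
by rewrite (hx w) (lin0 hF).
Qed.

End Main.

Theorem lemma3p5' (R : realType) (V : lmodType R[i]) (ip : V -> V -> R[i])
  (hip : is_inner_product ip) (hcomp : complete ip)
  (r : R[i]) (hr0 : 0 < r) (hr1 : r < 1)
  (A A' B B' : V -> V)
  (hA' : is_adjoint ip A A') (hB' : is_adjoint ip B B')
  (hA : in_C1r ip r A) (hB : in_C1r ip r B)
  (hAB : forall x, A (B x) = B (A x)) (hAB' : forall x, A (B' x) = B' (A x))
  (H1 : V -> Prop)
  (hH1 : closed_subspace ip H1) (hH1red : reduces H1 A A')
  (hH1cls : restr_in_CC1r ip r H1 A A')
  (hH1max : forall M : V -> Prop, closed_subspace ip M -> reduces M A A' ->
              restr_in_CC1r ip r M A A' -> forall x, M x -> H1 x) :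
  reduces H1 B B' /\ reduces (ocompl ip H1) B B'.
Proof.
have hAl : lin A by case: hA => [[h _] _].
have hBl : lin B by case: hB => [[h _] _].
have hB'l : lin B' := adj_lin hip hB'.
have sub1 : forall x, H1 x -> NN r A A' x.
  move=> x hx w; apply: (Q0_of_CC hip hA' hAl hH1cls); exact: ev_in.
have sub2 : forall x, NN r A A' x -> H1 x.
  apply: hH1max; [exact: (NN_closed hip hr0 hA' hAl) | exact: NN_red | exact: (NN_CC hip hr0 hr1 hA' hAl)].
have BA' : forall x, B (A' x) = A' (B x).
  move=> x; apply: (ip_ext hip) => z.
  by rewrite hB' (adj_sym hip hA') hAB' -hB' -(adj_sym hip hA').
have B'A' : forall x, B' (A' x) = A' (B' x).
  move=> x; apply: (ip_ext hip) => z.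
  by rewrite (adj_sym hip hB') (adj_sym hip hA') hAB -(adj_sym hip hB') -(adj_sym hip hA').
have HB : forall x, H1 x -> H1 (B x).
  move=> x hx; apply: (sub2); apply: (NN_inv hBl) => //; last exact: (sub1).
  try by move=> y; rewrite hAB.
have HB' : forall x, H1 x -> H1 (B' x).
  move=> x hx; apply: (sub2); apply: (NN_inv hB'l) => //; last exact: (sub1).
  try by move=> y; rewrite hAB'.
split; first by split.
split.
- by move=> x hx y hy; rewrite hB'; apply: hx; apply: HB'.
- by move=> x hx y hy; rewrite (adj_sym hip hB'); apply: hx; apply: HB.
Qed.

Unset Implicit Arguments.

Theorem lemma3p5 (R : realType) (V : lmodType R[i]) (ip : V -> V -> R[i])
  (hip : is_inner_product ip) (hcomp : complete ip)
  (r : R[i]) (hr0 : 0 < r) (hr1 : r < 1)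
  (A A' B B' : V -> V)
  (hA' : is_adjoint ip A A') (hB' : is_adjoint ip B B')
  (hA : in_C1r ip r A) (hB : in_C1r ip r B)
  (hAB : forall x, A (B x) = B (A x)) (hAB' : forall x, A (B' x) = B' (A x))
  (H1 : V -> Prop)
  (hH1 : closed_subspace ip H1) (hH1red : reduces H1 A A')
  (hH1cls : restr_in_CC1r ip r H1 A A')
  (hH1max : forall M : V -> Prop, closed_subspace ip M -> reduces M A A' ->
              restr_in_CC1r ip r M A A' -> forall x, M x -> H1 x) :
  reduces H1 B B' /\ reduces (ocompl ip H1) B B'.
Proof. exact: (@lemma3p5' R V ip hip hcomp r hr0 hr1 A A' B B' hA' hB' hA hB hAB hAB' H1 hH1 hH1red hH1cls hH1max). Qed.
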